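(* Let $T$ be a weighted star (a star $K_{1,n}$ with nonzero real edge weights). Then $T^{\#}$ is isomorphic to $T$.
   Context: For a weighted graph $G$ with adjacency matrix $A$ (entry $(i,j)$ equal to the weight of edge $v_iv_j$, or $0$ if no edge), $A^{\#}$ is the group inverse of $A$ (unique $X$ with $AXA=A$, $XAX=X$, $AX=XA$), and the group inverse graph $G^{\#}$ is the weighted graph on the same vertex set with $v_iv_j$ an edge iff $(A^{\#})_{ij}\neq 0$, weighted by that entry. Two weighted graphs are called isomorphic if their underlying (unweighted) graphs are isomorphic. *)

(* Defs.v *)
From mathcomp Require Import all_boot all_order all_algebra all_fingroup.
Set Implicit Arguments. Unset Strict Implicit. Unset Printing Implicit Defensive.
Import GRing.Theory Num.Theory.
Local Open Scope ring_scope.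

Definition is_group_inverse (R : nzRingType) (m : nat) (A X : 'M[R]_m) : Prop :=
  [/\ A *m X *m A = A, X *m A *m X = X & A *m X = X *m A].

(* Adjacency matrix of the weighted star K_{1,n} on vertices 'I_(n.+1):
   vertex 0 is the centre, vertices 1..n are the leaves; the edge between
   the centre and leaf j has weight w j (w ord0 is irrelevant). *)
Definition star_adj (R : nzRingType) (n : nat) (w : 'I_n.+1 -> R) : 'M[R]_n.+1 :=
  \matrix_(i, j)
    (if (i == ord0) && (j != ord0) then w j
     else if (j == ord0) && (i != ord0) then w i
     else 0).

(* The underlying (unweighted) graphs of the weighted graphs with adjacency
   matrices A and B (edge v_i v_j iff the (i,j) entry is nonzero) are
   isomorphic: some bijection of the vertex set maps edges exactly to edges. *)
Definition underlying_isomorphic (R : nzRingType) (m : nat) (A B : 'M[R]_m) : Prop :=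
  exists p : {perm 'I_m}, forall i j, (A i j != 0) = (B (p i) (p j) != 0).

(* Main.v *)
Require Import Defs.
From mathcomp Require Import all_boot all_order all_algebra all_fingroup.
From mathcomp Require Import ring.
Set Implicit Arguments. Unset Strict Implicit. Unset Printing Implicit Defensive.
Import GRing.Theory Num.Theory.
Local Open Scope ring_scope.

Lemma ginv_unique (R : nzRingType) (m : nat) (A X Y : 'M[R]_m) :
  is_group_inverse A X -> is_group_inverse A Y -> X = Y.
Proof.
case=> h1 h2 h3 [k1 k2 k3].
have E : A *m X = A *m Y.
  have -> : A *m X = (A *m Y) *m (A *m X) by rewrite mulmxA k1.
  rewrite k3 -mulmxA h3 [A *m (X *m A)]mulmxA h1.
  by [].
by rewrite -h2 -mulmxA E mulmxA -h3 E k3 k2.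
Qed.

Section Star.
Variable R : realFieldType.
Variable n : nat.
Variable w : 'I_n.+1 -> R.

Let e (i : 'I_n.+1) : R := (i == ord0)%:R.
Let v (i : 'I_n.+1) : R := if i == ord0 then 0 else w i.
Let s := \sum_(j < n.+1) v j ^+ 2.

Lemma sumE (f : 'I_n.+1 -> R) : \sum_j f j * e j = f ord0.
Proof.
rewrite (bigD1 ord0) //= big1 ?addr0 /e ?eqxx ?mulr1 // => j /negbTE ->.
by rewrite mulr0.
Qed.

Lemma adjE i j : star_adj w i j = e i * v j + e j * v i.
Proof.
rewrite /star_adj mxE /e /v.
case: (i =P ord0) => [->|/eqP hi]; case: (j =P ord0) => [->|/eqP hj] /=;
  rewrite ?eqxx ?hi ?hj /=; by ring.
Qed.

Lemma adj2E i k : (star_adj w *m star_adj w) i k = e i * e k * s + v i * v k.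
Proof.
rewrite mxE.
have -> : \sum_j star_adj w i j * star_adj w j k =
  \sum_j (e i * e k * v j ^+ 2 + (e i * v k * v j) * e j + (v i * e k * v j) * e j
          + (v i * v k) * (e j * e j)).
  by apply: eq_bigr => j _; rewrite !adjE; ring.
rewrite !big_split /= !sumE /s mulr_sumr /v eqxx.
have -> : \sum_j v i * v k * (e j * e j) = v i * v k.
  by under eq_bigr do rewrite mulrA; rewrite sumE /e eqxx /= mulr1.
rewrite /v; ring.
Qed.

Lemma adj3E : star_adj w *m star_adj w *m star_adj w = s *: star_adj w.
Proof.
apply/matrixP => i k; rewrite mxE [in RHS]mxE adjE.
have -> : \sum_j (star_adj w *m star_adj w) i j * star_adj w j k =
  \sum_j (e i * s * v j * e k * e j + (e i * s * v k) * (e j * e j)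
          + (v i * v k) * (v j * e j) + (v i * e k) * v j ^+ 2).
  by apply: eq_bigr => j _; rewrite adj2E adjE; ring.
rewrite !big_split /= sumE.
have -> : \sum_j e i * s * v k * (e j * e j) = e i * s * v k.
  by under eq_bigr do rewrite mulrA; rewrite sumE /e eqxx /= mulr1.
have -> : \sum_j v i * v k * (v j * e j) = 0.
  by under eq_bigr do rewrite mulrA; rewrite sumE /v eqxx mulr0.
rewrite -mulr_sumr /v eqxx -/v -/s; ring.
Qed.

Lemma s0A : s = 0 -> star_adj w = 0.
Proof.
move=> /eqP; rewrite /s psumr_eq0 => [/allP h|j _]; last exact: sqr_ge0.
apply/matrixP => i j; rewrite adjE mxE.
have z : forall k, v k = 0.
  by move=> k; have := h k (mem_index_enum k); rewrite /= sqrf_eq0 => /eqP.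
by rewrite !z; ring.
Qed.

Lemma ginv_star : is_group_inverse (star_adj w) (s^-1 *: star_adj w).
Proof.
have [s0|sn0] := eqVneq s 0.
  by rewrite (s0A s0) scaler0; split; rewrite !mul0mx.
split.
- by rewrite -scalemxAr -scalemxAl adj3E scalerA mulVf // scale1r.
- rewrite -scalemxAl -scalemxAr -scalemxAl adj3E !scalerA.
  by congr (_ *: _); field.
- by rewrite -scalemxAr -scalemxAl.
Qed.

Lemma iso_star i j :
  ((s^-1 *: star_adj w) i j != 0) = (star_adj w i j != 0).
Proof.
rewrite mxE; have [s0|sn0] := eqVneq s 0.
  by rewrite (s0A s0) mxE mulr0.
by rewrite mulf_eq0 invr_eq0 (negbTE sn0).
Qed.

End Star.

Theorem corollary2p3 (R : realFieldType) (n : nat) (w : 'I_n.+1 -> R)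
    (hw : forall j : 'I_n.+1, j != ord0 -> w j != 0) :
  (exists X : 'M[R]_n.+1, is_group_inverse (star_adj w) X) /\
  (forall X : 'M[R]_n.+1, is_group_inverse (star_adj w) X ->
     underlying_isomorphic X (star_adj w)).
Proof.
split; first by eexists; apply: ginv_star.
move=> X hX; rewrite (ginv_unique hX (ginv_star w)).
by exists 1%g => i j; rewrite !perm1 iso_star.
Qed.
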